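(* Consider the diffeomorphisms of $\mathbb{B}$ induced, via the identification $\Phi$, by left translations $L_A(X)=AX$ or right translations $R_A(X)=XA$ of $\mathrm{Sp}(1,1)$ ($A\in\mathrm{Sp}(1,1)$) that commute with the left $\mathrm{Sp}(1)\times\{1\}$-action and the right $\mathrm{Sp}(1)I_2$-action on $\mathrm{Sp}(1,1)$ (and hence descend to $\mathbb{B}$). These diffeomorphisms are given by (i.e., generate the same group of transformations of $\mathbb{B}$ as) the following actions on $\mathbb{B}$: (1) the left action of $\{\pm1\}\times\mathrm{Sp}(1)=\{\operatorname{diag}(\epsilon,u):\epsilon=\pm1,\ u\in\mathrm{Sp}(1)\}$ given by $\operatorname{diag}(\epsilon,u)\cdot q=\epsilon uq\overline{u}$; (2) the right action of $\mathrm{SO}_0(1,1)$ by classical Möbius transformations, $q\cdot H(t)=F_{H(t)}(q)=(1+\tanh(t)q)^{-1}(q+\tanh(t))$.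
   Context: $\mathbb{H}$ denotes the quaternions, $\mathbb{B}=\{q\in\mathbb{H}:|q|<1\}$, $\mathrm{Sp}(1)=\{u\in\mathbb{H}:|u|=1\}$. Let $I_{1,1}=\operatorname{diag}(1,-1)$ and $\mathrm{Sp}(1,1)=\{A\in M_2(\mathbb{H}):A^*I_{1,1}A=I_{1,1}\}$. For $A=\begin{pmatrix}a&c\\ b&d\end{pmatrix}\in\mathrm{Sp}(1,1)$ the classical Möbius transformation is $F_A(q)=(qc+d)^{-1}(qa+b)$. For $t\in\mathbb{R}$, $H(t)=\begin{pmatrix}\cosh t&\sinh t\\ \sinh t&\cosh t\end{pmatrix}$ and $\mathrm{SO}_0(1,1)=\{H(t):t\in\mathbb{R}\}$. Slice regular functions and regular Möbius transformations: the slice regular functions on $\mathbb{B}$ are exactly the functions $f(q)=\sum_{n\ge0}q^na_n$ ($a_n\in\mathbb{H}$) with the series converging on $\mathbb{B}$. The $*$-product is $(\sum q^na_n)*(\sum q^nb_n)=\sum_n q^n\sum_{k=0}^n a_kb_{n-k}$; $f^c(q)=\sum q^n\overline{a_n}$, $f^s=f*f^c$, $f^{-*}=(f^s)^{-1}f^c$ (pointwise, off the zero set of $f^s$). For $a,b\in\mathbb{H}$ let $\ell_{a,b}(q)=qa+b$. For $A=\begin{pmatrix}a&c\\ b&d\end{pmatrix}\in\mathrm{Sp}(1,1)$, the regular Möbius transformation is $\mathcal{F}_A=\ell_{c,d}^{-*}*\ell_{a,b}$, a diffeomorphism of $\mathbb{B}$ onto $\mathbb{B}$. Identification $\Phi$: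 $\mathrm{Sp}(1)\times\{1\}=\{\operatorname{diag}(u,1)\}$ acts on $\mathrm{Sp}(1,1)$ by left multiplication and $\mathrm{Sp}(1)I_2=\{uI_2\}$ by right multiplication. It is known that $\Phi:(\mathrm{Sp}(1)\times\{1\})\backslash\mathrm{Sp}(1,1)/\mathrm{Sp}(1)I_2\to\mathbb{B}$, $[A]\mapsto(\mathcal{F}_{A^{-1}})^{-1}(0)$, is a well-defined diffeomorphism. A diffeomorphism $\widetilde f$ of $\mathrm{Sp}(1,1)$ commuting with both actions induces the diffeomorphism $f$ of $\mathbb{B}$ with $f(\Phi([X]))=\Phi([\widetilde f(X)])$. *)

(* Defs.v *)
From HB Require Import structures.
From mathcomp Require Import all_boot all_order all_algebra.
From mathcomp Require Import reals exp sequences.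
Set Implicit Arguments. Unset Strict Implicit. Unset Printing Implicit Defensive.
Import Order.TTheory GRing.Theory Num.Theory.
Local Open Scope ring_scope.

Section Quaternions.
Variable R : realType.

Record quat := Quat { q0 : R; q1 : R; q2 : R; q3 : R }.

Definition qreal (r : R) : quat := Quat r 0 0 0.
Definition qzero : quat := qreal 0.
Definition qone : quat := qreal 1.
Definition qadd (x y : quat) : quat :=
  Quat (q0 x + q0 y) (q1 x + q1 y) (q2 x + q2 y) (q3 x + q3 y).
Definition qopp (x : quat) : quat := Quat (- q0 x) (- q1 x) (- q2 x) (- q3 x).
Definition qmul (x y : quat) : quat :=
  Quat (q0 x * q0 y - q1 x * q1 y - q2 x * q2 y - q3 x * q3 y)
       (q0 x * q1 y + q1 x * q0 y + q2 x * q3 y - q3 x * q2 y)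
       (q0 x * q2 y - q1 x * q3 y + q2 x * q0 y + q3 x * q1 y)
       (q0 x * q3 y + q1 x * q2 y - q2 x * q1 y + q3 x * q0 y).
Definition qconj (x : quat) : quat := Quat (q0 x) (- q1 x) (- q2 x) (- q3 x).
Definition qnorm2 (x : quat) : R := q0 x ^+ 2 + q1 x ^+ 2 + q2 x ^+ 2 + q3 x ^+ 2.
Definition qscale (r : R) (x : quat) : quat :=
  Quat (r * q0 x) (r * q1 x) (r * q2 x) (r * q3 x).
Definition qinv (x : quat) : quat := qscale (qnorm2 x)^-1 (qconj x).

Definition inB (q : quat) : Prop := qnorm2 q < 1.
Definition inSp1 (u : quat) : Prop := qnorm2 u = 1.
Definition Ball := {q : quat | inB q}.

(** 2x2 quaternionic matrices  [[m00, m01], [m10, m11]].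
    The paper's A = (a c ; b d) is  m00 = a, m01 = c, m10 = b, m11 = d. *)
Record mat2 := Mat2 { m00 : quat; m01 : quat; m10 : quat; m11 : quat }.

Definition mmul (A B : mat2) : mat2 :=
  Mat2 (qadd (qmul (m00 A) (m00 B)) (qmul (m01 A) (m10 B)))
       (qadd (qmul (m00 A) (m01 B)) (qmul (m01 A) (m11 B)))
       (qadd (qmul (m10 A) (m00 B)) (qmul (m11 A) (m10 B)))
       (qadd (qmul (m10 A) (m01 B)) (qmul (m11 A) (m11 B))).
Definition mstar (A : mat2) : mat2 :=
  Mat2 (qconj (m00 A)) (qconj (m10 A)) (qconj (m01 A)) (qconj (m11 A)).
Definition mdiag (x y : quat) : mat2 := Mat2 x qzero qzero y.
Definition mid : mat2 := mdiag qone qone.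
Definition I11 : mat2 := mdiag qone (qopp qone).

Definition inSp11 (A : mat2) : Prop := mmul (mmul (mstar A) I11) A = I11.

Definition Fcl (A : mat2) (q : quat) : quat :=
  qmul (qinv (qadd (qmul q (m01 A)) (m11 A)))
       (qadd (qmul q (m00 A)) (m10 A)).

Definition coshR (t : R) : R := (expR t + expR (- t)) / 2.
Definition sinhR (t : R) : R := (expR t - expR (- t)) / 2.
Definition Hmat (t : R) : mat2 :=
  Mat2 (qreal (coshR t)) (qreal (sinhR t)) (qreal (sinhR t)) (qreal (coshR t)).

(** Slice polynomials  f(q) = sum_n q^n a_n, coefficients listed a_0, a_1, ... *)
Definition spoly := seq quat.

Fixpoint speval (p : spoly) (q : quat) : quat :=
  match p with
  | [::] => qzero
  | a :: p' => qadd a (qmul q (speval p' q))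
  end.

Fixpoint spadd (p r : spoly) : spoly :=
  match p, r with
  | [::], _ => r
  | _, [::] => p
  | a :: p', b :: r' => qadd a b :: spadd p' r'
  end.

(* *-product: coefficient n is sum_{k<=n} a_k b_{n-k} *)
Fixpoint sstar (p r : spoly) : spoly :=
  match p with
  | [::] => [::]
  | a :: p' => spadd (map (qmul a) r) (qzero :: sstar p' r)
  end.

Definition sconj (p : spoly) : spoly := map qconj p.
Definition ssym (p : spoly) : spoly := sstar p (sconj p).

Definition sinvstar (p : spoly) (q : quat) : quat :=
  qmul (qinv (speval (ssym p) q)) (speval (sconj p) q).

(* *-product h * p of a slice regular function h = sum_m q^m c_m with a slice
   polynomial p = sum_n q^n b_n:  (h * p)(q) = sum_{m,n} q^(m+n) c_m b_n
   = sum_n q^n h(q) b_n. *)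
Fixpoint star_fun_poly (h : quat -> quat) (p : spoly) (q : quat) : quat :=
  match p with
  | [::] => qzero
  | b :: p' => qadd (qmul (h q) b) (qmul q (star_fun_poly h p' q))
  end.

Definition lin (a b : quat) : spoly := [:: b; a].

Definition RegMob (A : mat2) : quat -> quat :=
  star_fun_poly (sinvstar (lin (m01 A) (m11 A))) (lin (m00 A) (m10 A)).

(** Phi([X]) = (F_{X^{-1}})^{-1}(0), written as a relation:
    Phi_rel X q  <->  q is the point of B with F_{X^{-1}}(q) = 0. *)
Definition Phi_rel (X : mat2) (q : Ball) : Prop :=
  exists Y, mmul Y X = mid /\ mmul X Y = mid /\ RegMob Y (val q) = qzero.

Definition commutes_actions (ft : mat2 -> mat2) : Prop :=
  forall u X, inSp1 u -> inSp11 X ->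
    ft (mmul (mdiag u qone) X) = mmul (mdiag u qone) (ft X) /\
    ft (mmul X (mdiag u u)) = mmul (ft X) (mdiag u u).

Definition induced (ft : mat2 -> mat2) (f : Ball -> Ball) : Prop :=
  forall X, inSp11 X -> forall q, Phi_rel X q -> Phi_rel (ft X) (f q).

Definition translation_maps (f : Ball -> Ball) : Prop :=
  exists A, inSp11 A /\
    ((commutes_actions (mmul A) /\ induced (mmul A) f) \/
     (commutes_actions (fun X => mmul X A) /\ induced (fun X => mmul X A) f)).

Definition listed_maps (f : Ball -> Ball) : Prop :=
  (exists (eps : R) (u : quat), (eps = 1 \/ eps = -1) /\ inSp1 u /\
     forall q, val (f q) = qmul (qmul (qmul (qreal eps) u) (val q)) (qconj u))
  \/ (exists t : R, forall q, val (f q) = Fcl (Hmat t) (val q)).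

End Quaternions.

Inductive gen_group (T : Type) (S : (T -> T) -> Prop) : (T -> T) -> Prop :=
  | gen_in f : S f -> gen_group S f
  | gen_id : gen_group S id
  | gen_comp f g : gen_group S f -> gen_group S g -> gen_group S (f \o g)
  | gen_inv f g : gen_group S f -> cancel f g -> cancel g f -> gen_group S g.

(* Main.v *)
From HB Require Import structures.
Require Import Defs.
From mathcomp Require Import all_boot all_order all_algebra reals exp.
From mathcomp Require Import ring lra.
From Stdlib Require Import FunctionalExtensionality.
Set Implicit Arguments. Unset Strict Implicit. Unset Printing Implicit Defensive.
Import Order.TTheory GRing.Theory Num.Theory.
Local Open Scope ring_scope.


Lemma quat_ext (R : realType) (x y : quat R) :
  q0 x = q0 y -> q1 x = q1 y -> q2 x = q2 y -> q3 x = q3 y -> x = y.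
Proof. by case: x => ????; case: y => ???? /= -> -> -> ->. Qed.

Ltac qext := apply: quat_ext => /=; ring.

Definition quat_to (R : realType) (x : quat R) := (q0 x, q1 x, q2 x, q3 x).
Definition quat_of (R : realType) (p : R * R * R * R) :=
  let: (a, b, c, d) := p in Quat a b c d.
Lemma quat_toK (R : realType) : cancel (@quat_to R) (@quat_of R).
Proof. by case. Qed.

HB.instance Definition _ (R : realType) := Equality.copy (quat R) (can_type (@quat_toK R)).
HB.instance Definition _ (R : realType) := Choice.copy (quat R) (can_type (@quat_toK R)).

Section Q.
Variable R : realType.
Implicit Types x y z : quat R.

Lemma qaddA : associative (@qadd R). Proof. move=> ???; qext. Qed.
Lemma qaddC : commutative (@qadd R). Proof. move=> ??; qext. Qed.
Lemma qadd0 : left_id (@qzero R) (@qadd R). Proof. move=> ?; qext. Qed.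
Lemma qaddN : left_inverse (@qzero R) (@qopp R) (@qadd R). Proof. move=> ?; qext. Qed.
Lemma qmulA : associative (@qmul R). Proof. move=> ???; qext. Qed.
Lemma qmul1 : left_id (@qone R) (@qmul R). Proof. move=> ?; qext. Qed.
Lemma qmulr1 : right_id (@qone R) (@qmul R). Proof. move=> ?; qext. Qed.
Lemma qmulDl : left_distributive (@qmul R) (@qadd R). Proof. move=> ???; qext. Qed.
Lemma qmulDr : right_distributive (@qmul R) (@qadd R). Proof. move=> ???; qext. Qed.
Lemma qone_neq0 : @qone R != @qzero R.
Proof. apply/eqP => /(congr1 (@q0 R)) /= /eqP; by rewrite oner_eq0. Qed.
End Q.

HB.instance Definition _ (R : realType) := GRing.isNzRing.Build (quat R)
  (@qaddA R) (@qaddC R) (@qadd0 R) (@qaddN R) (@qmulA R) (@qmul1 R) (@qmulr1 R)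
  (@qmulDl R) (@qmulDr R) (@qone_neq0 R).

Section Q2.
Variable R : realType.
Implicit Types x y z : quat R.
Lemma qnorm2_ge0 x : 0 <= qnorm2 x.
Proof. rewrite /qnorm2; nra. Qed.
Lemma qnorm2_eq0 x : qnorm2 x = 0 -> x = 0.
Proof.
case: x => a b c d; rewrite /qnorm2 /= => H.
have ha : a = 0 by nra. have hb : b = 0 by nra. have hc : c = 0 by nra. have hd : d = 0 by nra.
by subst; apply: quat_ext.
Qed.
Definition qunit : pred (quat R) := fun x => qnorm2 x != 0.
Lemma qinvK x : qunit x -> qmul (qinv x) x = 1.
Proof. rewrite /qunit => h; apply: quat_ext; rewrite /= /qnorm2 in h *; field; exact h. Qed.
Lemma qinvK' x : qunit x -> qmul x (qinv x) = 1.
Proof. rewrite /qunit => h; apply: quat_ext; rewrite /= /qnorm2 in h *; field; exact h. Qed.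
Lemma qnorm2M x y : qnorm2 (qmul x y) = qnorm2 x * qnorm2 y.
Proof. rewrite /qnorm2 /=; ring. Qed.
Lemma qnorm2_1 : qnorm2 (1 : quat R) = 1.
Proof. rewrite /qnorm2 /=; ring. Qed.
Lemma qunitP x y : y * x = 1 /\ x * y = 1 -> qunit x.
Proof.
case=> h _; apply/eqP => h0.
have := congr1 (@qnorm2 R) h. rewrite /GRing.mul /= qnorm2M h0 qnorm2_1 mulr0.
move=> /eqP; by rewrite eq_sym oner_eq0.
Qed.
Lemma qinv_out : {in [predC qunit], (@qinv R) =1 id}.
Proof.
move=> x; rewrite inE /qunit negbK => /eqP h; have -> := qnorm2_eq0 h.
apply: quat_ext; rewrite /= /qnorm2 /=; rewrite ?expr0n /= ?add0r ?invr0; ring.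
Qed.
End Q2.

HB.instance Definition _ (R : realType) := GRing.NzRing_hasMulInverse.Build (quat R)
  (fun x hx => @qinvK R x hx) (fun x hx => @qinvK' R x hx) (@qunitP R) (@qinv_out R).

Section Q3.
Variable R : realType.
Implicit Types x y z q : quat R.
Implicit Types r s : R.
Lemma qmulE x y : qmul x y = x * y. Proof. by []. Qed.
Lemma qaddE x y : qadd x y = x + y. Proof. by []. Qed.
Lemma qoppE x : qopp x = - x. Proof. by []. Qed.
Lemma qzeroE : qzero R = 0 :> quat R. Proof. by []. Qed.
Lemma qoneE : qone R = 1 :> quat R. Proof. by []. Qed.
Lemma qinvE x : qinv x = x^-1. Proof. by []. Qed.
Lemma qunitE x : (x \is a GRing.unit) = (qnorm2 x != 0). Proof. by []. Qed.
Lemma qreal_comm r x : qreal r * x = x * qreal r. Proof. qext. Qed.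
Lemma qrealM r s : qreal (r * s) = qreal r * qreal s. Proof. qext. Qed.
Lemma qrealD r s : qreal (r + s) = qreal r + qreal s. Proof. qext. Qed.
Lemma qrealN r : qreal (- r) = - qreal r. Proof. qext. Qed.
Lemma qreal1 : qreal 1 = 1 :> quat R. Proof. by []. Qed.
Lemma qreal0 : qreal 0 = 0 :> quat R. Proof. by []. Qed.
Lemma qconjM x y : qconj (x * y) = qconj y * qconj x. Proof. qext. Qed.
Lemma qconjD x y : qconj (x + y) = qconj x + qconj y. Proof. qext. Qed.
Lemma qconjN x : qconj (- x) = - qconj x. Proof. qext. Qed.
Lemma qconjK x : qconj (qconj x) = x. Proof. qext. Qed.
Lemma qmulconj x : x * qconj x = qreal (qnorm2 x). Proof. rewrite /qnorm2; qext. Qed.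
Lemma qconjmul x : qconj x * x = qreal (qnorm2 x). Proof. rewrite /qnorm2; qext. Qed.
Lemma qnorm2_conj x : qnorm2 (qconj x) = qnorm2 x. Proof. rewrite /qnorm2 /=; ring. Qed.
Lemma qnorm2_mul x y : qnorm2 (x * y) = qnorm2 x * qnorm2 y. Proof. exact: qnorm2M. Qed.
Lemma qnorm2_real r : qnorm2 (qreal r) = r ^+ 2. Proof. rewrite /qnorm2 /=; ring. Qed.
Lemma qrealU r : r != 0 -> qreal r \is a GRing.unit.
Proof. by move=> h; rewrite qunitE qnorm2_real sqrf_eq0. Qed.
Lemma qunit_norm x : 0 < qnorm2 x -> x \is a GRing.unit.
Proof. by move=> h; rewrite qunitE lt0r_neq0. Qed.
Lemma qinv_real r : (qreal r)^-1 = qreal r^-1.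
Proof.
have [->|h] := eqVneq r 0; first by apply: quat_ext => /=; rewrite ?invr0; ring.
apply: (mulrI (qrealU h)); rewrite divrr ?qrealU // -qrealM divff //.
Qed.
End Q3.


Lemma mat_ext (R : realType) (A B : mat2 R) :
  m00 A = m00 B -> m01 A = m01 B -> m10 A = m10 B -> m11 A = m11 B -> A = B.
Proof. by case: A => ????; case: B => ???? /= -> -> -> ->. Qed.

Ltac mext := apply: mat_ext; qext.

Section M.
Variable R : realType.
Implicit Types A B C X Y : mat2 R.
Implicit Types x y z q : quat R.

Lemma mmulA A B C : mmul A (mmul B C) = mmul (mmul A B) C.
Proof. case: A => ????; case: B => ????; case: C => ????; mext. Qed.
Lemma mmul1 A : mmul (mid R) A = A.
Proof. case: A => ????; mext. Qed.
Lemma mmulr1 A : mmul A (mid R) = A.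
Proof. case: A => ????; mext. Qed.
Lemma mstarM A B : mstar (mmul A B) = mmul (mstar B) (mstar A).
Proof. case: A => ????; case: B => ????; mext. Qed.

Lemma sp11M A B : inSp11 A -> inSp11 B -> inSp11 (mmul A B).
Proof.
rewrite /inSp11 => hA hB; rewrite mstarM.
have -> : mmul (mmul (mmul (mstar B) (mstar A)) (I11 R)) (mmul A B) =
  mmul (mstar B) (mmul (mmul (mmul (mstar A) (I11 R)) A) B) by rewrite !mmulA.
by rewrite hA mmulA.
Qed.

Lemma quat_comp x y : x = y -> [/\ q0 x = q0 y, q1 x = q1 y, q2 x = q2 y & q3 x = q3 y].
Proof. by move=> ->. Qed.

Lemma sp11P A : inSp11 A ->
  [/\ qnorm2 (m00 A) - qnorm2 (m10 A) = 1, qnorm2 (m11 A) - qnorm2 (m01 A) = 1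
   & qconj (m01 A) * m00 A = qconj (m11 A) * m10 A].
Proof.
case: A => a c b d; rewrite /inSp11 => H.
have [h1 h2 h3 h4] := quat_comp (congr1 (@m00 R) H).
have [h5 h6 h7 h8] := quat_comp (congr1 (@m10 R) H).
have [h9 h10 h11 h12] := quat_comp (congr1 (@m11 R) H).
rewrite /= in h1 h2 h3 h4 h5 h6 h7 h8 h9 h10 h11 h12.
rewrite /qnorm2 /=; split; [lra|lra|].
apply: quat_ext => /=; lra.
Qed.
End M.

Section M2.
Variable R : realType.
Implicit Types A B C X Y : mat2 R.
Implicit Types x y z q : quat R.

Lemma sp11_more A : inSp11 A ->
  [/\ qnorm2 (m10 A) = qnorm2 (m01 A), qnorm2 (m00 A) = qnorm2 (m11 A)
   & m10 A * qconj (m00 A) = m11 A * qconj (m01 A)].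
Proof.
case: A => a c b d /sp11P /= [h1 h2 H].
have hn := congr1 (@qnorm2 R) H; rewrite !qnorm2_mul !qnorm2_conj in hn.
have ha : qnorm2 a = 1 + qnorm2 b by lra.
have hd : qnorm2 d = 1 + qnorm2 c by lra.
rewrite ha hd in hn.
have hbc : qnorm2 b = qnorm2 c by nra.
split => //; first by rewrite ha hd hbc.
have e1 : d * qconj c * qreal (qnorm2 a) = qreal (qnorm2 d) * (b * qconj a).
  by rewrite -!qmulconj -mulrA (mulrA (qconj c)) H !mulrA.
have had : qnorm2 a = qnorm2 d by rewrite ha hd hbc.
rewrite had qreal_comm in e1.
apply: (mulIr (qrealU _)) ; last by symmetry; exact e1.
have := qnorm2_ge0 c; rewrite hd => h0; apply: lt0r_neq0; lra.
Qed.
End M2.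

Definition Zm (R : realType) (X : mat2 R) :=
  Mat2 (qconj (m00 X)) (- qconj (m10 X)) (- qconj (m01 X)) (qconj (m11 X)).

Section M3.
Variable R : realType.
Implicit Types A B C X Y : mat2 R.
Implicit Types x y z q : quat R.

Lemma ZmX X : inSp11 X -> mmul (Zm X) X = mid R /\ mmul X (Zm X) = mid R.
Proof.
move=> hX; have [h1 h2 H] := sp11P hX; have [h3 h4 H'] := sp11_more hX.
move: h1 h2 H h3 h4 H'; clear hX; case: X => a c b d /=; rewrite /qnorm2 => h1 h2 H h3 h4 H'.
have [e1 e2 e3 e4] := quat_comp H; have [f1 f2 f3 f4] := quat_comp H'.
rewrite /= in e1 e2 e3 e4 f1 f2 f3 f4.
split; apply: mat_ext; apply: quat_ext => /=; lra.
Qed.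

Lemma Phi_Y X Y : inSp11 X -> mmul Y X = mid R -> mmul X Y = mid R -> Y = Zm X.
Proof.
move=> hX _ hXY; have [hZ _] := ZmX hX.
by rewrite -(mmul1 Y) -hZ -mmulA hXY mmulr1.
Qed.
End M3.


Lemma real_key (R : realType) (s0 s1 s2 x Y : R) :
  0 <= s2 -> s0 = 1 + s2 -> s1 ^+ 2 <= 4 * s2 * s0 -> x ^+ 2 + Y < 1 -> 0 <= Y ->
  (s0 + s1 * x + s2 * (x ^+ 2 - Y)) ^+ 2 + (s1 + 2 * s2 * x) ^+ 2 * Y = 0 -> False.
Proof.
move=> hs2 hs0 hcs hx hY h.
have hA : s0 + s1 * x + s2 * (x ^+ 2 - Y) = 0.
  have h1 : 0 <= (s1 + 2 * s2 * x) ^+ 2 * Y by apply: mulr_ge0 => //; apply: sqr_ge0.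
  have h2 : 0 <= (s0 + s1 * x + s2 * (x ^+ 2 - Y)) ^+ 2 by apply: sqr_ge0.
  apply/eqP; rewrite -sqrf_eq0; apply/eqP; lra.
have hB : (s1 + 2 * s2 * x) ^+ 2 * Y = 0 by rewrite hA expr0n /= add0r in h.
move/eqP: hB; rewrite mulf_eq0 sqrf_eq0 => /orP [/eqP hB|/eqP hY0].
  have e : s1 = - 2 * s2 * x by lra.
  rewrite e in hA. nra.
rewrite hY0 subr0 in hA.
have e4 : (s1 * x + 2 * s0) ^+ 2 + (4 * s2 * s0 - s1 ^+ 2) * x ^+ 2 = 0.
  have -> : (s1 * x + 2 * s0) ^+ 2 + (4 * s2 * s0 - s1 ^+ 2) * x ^+ 2 =
     4 * s0 * (s0 + s1 * x + s2 * x ^+ 2) by ring.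
  by rewrite hA mulr0.
have hp1 : 0 <= (4 * s2 * s0 - s1 ^+ 2) * x ^+ 2 by apply: mulr_ge0; [lra|apply: sqr_ge0].
have hp2 : 0 <= (s1 * x + 2 * s0) ^+ 2 by apply: sqr_ge0.
have hq : (s1 * x + 2 * s0) ^+ 2 = 0 by lra.
move/eqP: hq; rewrite sqrf_eq0 => /eqP hq.
have hx2 : x ^+ 2 < 1 by lra.
nra.
Qed.

Section R1.
Variable R : realType.
Implicit Types A B C X Y : mat2 R.
Implicit Types x y z q : quat R.

Definition sr (r0 r1 r2 : R) q := qreal r0 + q * qreal r1 + q * q * qreal r2.
Definition qdot x y := q0 x * q0 y + q1 x * q1 y + q2 x * q2 y + q3 x * q3 y.

Lemma speval_S b d q :
  speval (ssym (lin (- qconj b) (qconj d))) q = sr (qnorm2 d) (-2 * qdot d b) (qnorm2 b) q.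
Proof. rewrite /sr /qnorm2 /qdot; qext. Qed.

Lemma speval_G b d q :
  speval (sconj (lin (- qconj b) (qconj d))) q = d - q * b.
Proof. qext. Qed.

Lemma comm_sr r0 r1 r2 q : GRing.comm q (sr r0 r1 r2 q).
Proof. rewrite /GRing.comm /sr; qext. Qed.

Lemma RegMobZ X q :
  RegMob (Zm X) q = (sr (qnorm2 (m11 X)) (-2 * qdot (m11 X) (m10 X)) (qnorm2 (m10 X)) q)^-1 *
    ((m11 X - q * m10 X) * (- qconj (m01 X)) + q * ((m11 X - q * m10 X) * qconj (m00 X))).
Proof.
have -> : RegMob (Zm X) q = qadd (qmul (sinvstar (lin (m01 (Zm X)) (m11 (Zm X))) q) (m10 (Zm X)))
  (qmul q (qadd (qmul (sinvstar (lin (m01 (Zm X)) (m11 (Zm X))) q) (m00 (Zm X))) (qmul q (qzero R)))) by [].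
rewrite /sinvstar /Zm; cbn [m00 m01 m10 m11].
rewrite speval_S speval_G !(qmulE, qaddE, qinvE, qzeroE) mulr0 addr0.
set S := sr _ _ _ q.
have hc : GRing.comm q S^-1 by apply: commrV; apply: comm_sr.
set G := m11 X - q * m10 X. clearbody G S.
rewrite [q * (_ * _)]mulrA [q * (S^-1 * G)]mulrA hc mulrDr.
by rewrite -!mulrA.
Qed.

Lemma qnorm2_sr r0 r1 r2 q :
  qnorm2 (sr r0 r1 r2 q) =
  (r0 + r1 * q0 q + r2 * (q0 q ^+ 2 - (q1 q ^+ 2 + q2 q ^+ 2 + q3 q ^+ 2))) ^+ 2 +
  (r1 + 2 * r2 * q0 q) ^+ 2 * (q1 q ^+ 2 + q2 q ^+ 2 + q3 q ^+ 2).
Proof. rewrite /qnorm2 /sr /=; ring. Qed.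

Lemma sr_unit b d q : qnorm2 d = 1 + qnorm2 b -> qnorm2 q < 1 ->
  sr (qnorm2 d) (-2 * qdot d b) (qnorm2 b) q \is a GRing.unit.
Proof.
move=> hd hq; rewrite qunitE qnorm2_sr; apply/eqP => h.
apply: (@real_key R (qnorm2 d) (-2 * qdot d b) (qnorm2 b) (q0 q) (q1 q ^+ 2 + q2 q ^+ 2 + q3 q ^+ 2)) => //.
- exact: qnorm2_ge0.
- have e : qnorm2 d * qnorm2 b - qdot d b ^+ 2 =
    (q0 d * q1 b - q1 d * q0 b) ^+ 2 + (q0 d * q2 b - q2 d * q0 b) ^+ 2 +
    (q0 d * q3 b - q3 d * q0 b) ^+ 2 + (q1 d * q2 b - q2 d * q1 b) ^+ 2 +
    (q1 d * q3 b - q3 d * q1 b) ^+ 2 + (q2 d * q3 b - q3 d * q2 b) ^+ 2.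
    rewrite /qnorm2 /qdot; ring.
  have : 0 <= qnorm2 d * qnorm2 b - qdot d b ^+ 2.
    rewrite e; do ! (apply: addr_ge0); apply: sqr_ge0.
  move=> h0; have -> : (-2 * qdot d b) ^+ 2 = 4 * qdot d b ^+ 2 by ring.
  nra.
- move: hq; rewrite /qnorm2; lra.
- by do ! (apply: addr_ge0); apply: sqr_ge0.
Qed.
End R1.


Section L.
Variable R : realType.
Implicit Types A B C X Y : mat2 R.
Implicit Types x y z q m : quat R.

Lemma qnorm2_inv x : qnorm2 x^-1 = (qnorm2 x)^-1.
Proof.
have [h|h] := eqVneq (qnorm2 x) 0.
  by have hx := qnorm2_eq0 h; rewrite h invr0 hx invr0 -hx.
rewrite -qinvE /qinv /qnorm2 /= in h *; field; exact h.
Qed.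

Lemma E_zero m a c d :
  d * qconj c = m * d * qconj a ->
  (d - m * (m * d)) * - qconj c + m * ((d - m * (m * d)) * qconj a) = 0.
Proof.
move=> h.
rewrite mulrN !mulrBl -?mulrA.
have h' : d * qconj c = m * (d * qconj a) by rewrite h mulrA.
by rewrite h' mulrBr addNr.
Qed.
End L.

Section L2.
Variable R : realType.
Implicit Types A B C X Y : mat2 R.
Implicit Types x y z q m : quat R.

Lemma uniq_core q m a c d (n : R) :
  n != 0 -> d \is a GRing.unit ->
  qconj c * a = qconj d * (m * d) -> qconj a * a = qreal n -> d * qconj d = qreal n ->
  (d - q * (m * d)) * - qconj c + q * ((d - q * (m * d)) * qconj a) = 0 ->
  q * (1 - q * m) = (1 - q * m) * m.
Proof.
move=> hn hd H Na dd E.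
have eG : d - q * (m * d) = (1 - q * m) * d by rewrite mulrBl mul1r mulrA.
rewrite eG in E; set G := 1 - q * m in E *; clearbody G.
have E2 := congr1 (fun z => z * a) E; rewrite /= mul0r mulrDl mulrN mulNr in E2.
rewrite -!mulrA H Na in E2.
rewrite (mulrA d) dd -qreal_comm (mulrA G) -(qreal_comm n G) -mulrA in E2.
rewrite (mulrA G (qreal n)) -(qreal_comm n G) -mulrA (mulrA q (qreal n)) -(qreal_comm n q) -mulrA -mulrN -mulrDr in E2.
have E3 : - (G * (m * d)) + q * (G * d) = 0.
  by rewrite -[LHS]mul1r -(mulVr (qrealU hn)) -mulrA E2 mulr0.
rewrite !mulrA -mulNr -mulrDl in E3.
have E4 : - (G * m) + q * G = 0.
  by rewrite -[LHS]mulr1 -(divrr hd) mulrA E3 mul0r.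
by apply: (addIr (- (G * m))); rewrite subrr addrC E4.
Qed.
End L2.

Section L3.
Variable R : realType.
Implicit Types x y z q m : quat R.
Lemma uniq_fin q m : q * (1 - q * m) = (1 - q * m) * m -> qnorm2 q < 1 -> qnorm2 m < 1 -> q = m.
Proof.
move=> h hq hm.
rewrite mulrBr mulr1 mulrA mulrBl mul1r in h.
have e : q - m = q * (q - m) * m.
  rewrite mulrBr mulrBl; move/eqP: h; rewrite subr_eq => /eqP h.
  by rewrite {1}h [_ + _ - m]addrAC [m - _ - m]addrAC subrr add0r addrC.
have hn := congr1 (@qnorm2 R) e; rewrite !qnorm2_mul in hn.
have h0 := qnorm2_ge0 (q - m); have h1 := qnorm2_ge0 q; have h2 := qnorm2_ge0 m.
have hp : qnorm2 q * qnorm2 m < 1 by nra.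
have hz : qnorm2 (q - m) = 0.
  have : qnorm2 (q - m) * (1 - qnorm2 q * qnorm2 m) = 0.
    rewrite mulrBr mulr1 {1}hn; ring.
  move/eqP; rewrite mulf_eq0 => /orP [/eqP //|]; rewrite subr_eq0 => /eqP h3; lra.
by apply/eqP; rewrite -subr_eq0; apply/eqP; apply: qnorm2_eq0.
Qed.
End L3.


Section P.
Variable R : realType.
Implicit Types A B C X Y : mat2 R.
Implicit Types x y z q m : quat R.

Definition phiq X := m10 X * (m11 X)^-1.

Lemma sp11_norms X : inSp11 X ->
  qnorm2 (m11 X) = 1 + qnorm2 (m10 X) /\ qnorm2 (m00 X) = qnorm2 (m11 X).
Proof. move=> hX; have [h1 h2 _] := sp11P hX; have [h3 h4 _] := sp11_more hX; split; lra. Qed.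

Lemma sp11_dunit X : inSp11 X -> m11 X \is a GRing.unit.
Proof.
move=> hX; have [h _] := sp11_norms hX; apply: qunit_norm; rewrite h.
have := qnorm2_ge0 (m10 X); lra.
Qed.

Lemma phiq_B X : inSp11 X -> qnorm2 (phiq X) < 1.
Proof.
move=> hX; have [h _] := sp11_norms hX.
have h0 := qnorm2_ge0 (m10 X).
rewrite /phiq qnorm2_mul qnorm2_inv h.
rewrite ltr_pdivrMr; lra.
Qed.

Lemma phiq_zero X : inSp11 X -> RegMob (Zm X) (phiq X) = 0.
Proof.
move=> hX; have [_ _ H'] := sp11_more hX; have hd := sp11_dunit hX.
rewrite RegMobZ.
have hb : m10 X = phiq X * m11 X by rewrite /phiq -mulrA mulVr // mulr1.
set m := phiq X in hb *; clearbody m.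
rewrite [in X in _ * X]hb E_zero ?mulr0 //.
by rewrite -H' hb.
Qed.

Lemma phi_exists X (hX : inSp11 X) : Phi_rel X (exist _ (phiq X) (phiq_B hX)).
Proof.
have [h1 h2] := ZmX hX; exists (Zm X); split => //; split => //.
exact: phiq_zero.
Qed.

Lemma phi_unique X (q : Ball R) : inSp11 X -> Phi_rel X q -> val q = phiq X.
Proof.
move=> hX [Y [hYX [hXY hR]]].
rewrite (Phi_Y hX hYX hXY) RegMobZ in hR.
have [hn hna] := sp11_norms hX; have hd := sp11_dunit hX.
have hq : qnorm2 (val q) < 1 by case: q {hR}.
have hS := sr_unit hn hq.
set S := sr _ _ _ _ in hS hR.
set E := _ + _ in hR.
have hE : E = 0 by rewrite -[E]mul1r -(divrr hS) -mulrA hR qzeroE mulr0.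
have hb : m10 X = phiq X * m11 X by rewrite /phiq -mulrA mulVr // mulr1.
have [_ _ H] := sp11P hX.
rewrite /E hb in hE. rewrite hb in H.
set m := phiq X in hE H *.
have hm : qnorm2 m < 1 by exact: phiq_B.
clearbody m.
apply: uniq_fin => //.
apply: (uniq_core (n := qnorm2 (m11 X))) hd H _ _ hE.
- have := qnorm2_ge0 (m10 X); rewrite hn => h0; apply: lt0r_neq0; lra.
- by rewrite qconjmul hna.
- by rewrite qmulconj.
Qed.
End P.


Section G.
Variable R : realType.
Implicit Types A B C X Y : mat2 R.
Implicit Types x y z q m u : quat R.

Lemma ball_eq (p q : Ball R) : val p = val q -> p = q.
Proof.
case: p => p hp; case: q => q hq /= e; subst.
by f_equal; apply: bool_irrelevance.
Qed.

Lemma cosh_sinh (t : R) : coshR t ^+ 2 - sinhR t ^+ 2 = 1.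
Proof.
rewrite /coshR /sinhR expRN.
have h := expR_gt0 t.
field; exact: lt0r_neq0.
Qed.

Lemma hyp_param (c s : R) : 0 < c -> c ^+ 2 - s ^+ 2 = 1 ->
  exists t, coshR t = c /\ sinhR t = s.
Proof.
move=> hc h.
have hcs : 0 < c + s.
  have : s ^+ 2 < c ^+ 2 by lra.
  nra.
exists (ln (c + s)); rewrite /coshR /sinhR expRN lnK ?posrE //.
have e : (c + s)^-1 = c - s.
  apply: (mulfI (lt0r_neq0 hcs)); rewrite divff ?lt0r_neq0 //.
  by rewrite -h; ring.
rewrite e; split; field => //.
Qed.

Lemma unit_lin q (g d : R) : qnorm2 q < 1 -> d ^+ 2 = 1 + g ^+ 2 ->
  q * qreal g + qreal d \is a GRing.unit.
Proof.
move=> hq hd; apply: qunit_norm.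
have e : qnorm2 (q * qreal g + qreal d) =
   (q0 q * g + d) ^+ 2 + g ^+ 2 * (q1 q ^+ 2 + q2 q ^+ 2 + q3 q ^+ 2).
  rewrite /qnorm2 /=; ring.
rewrite e.
have hY : 0 <= q1 q ^+ 2 + q2 q ^+ 2 + q3 q ^+ 2 by do ! (apply: addr_ge0); apply: sqr_ge0.
have hx : q0 q ^+ 2 < 1 by move: hq; rewrite /qnorm2; nra.
rewrite lt_neqAle; apply/andP; split; last first.
  by apply: addr_ge0; [apply: sqr_ge0| apply: mulr_ge0 => //; apply: sqr_ge0].
apply/eqP => h0.
have h1 : 0 <= g ^+ 2 * (q1 q ^+ 2 + q2 q ^+ 2 + q3 q ^+ 2) by apply: mulr_ge0 => //; apply: sqr_ge0.
have h2 : 0 <= (q0 q * g + d) ^+ 2 by apply: sqr_ge0.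
have h3 : (q0 q * g + d) ^+ 2 = 0 by lra.
move/eqP: h3; rewrite sqrf_eq0 => /eqP h3.
have ed : d = - (q0 q * g) by lra.
rewrite ed in hd. nra.
Qed.

Lemma qinv_scale (k : R) P : k != 0 -> (qreal k * P)^-1 = qreal k^-1 * P^-1.
Proof.
move=> hk; rewrite -!qinvE /qinv qnorm2_mul qnorm2_real invfM.
move: (qnorm2 P)^-1 => N.
apply: quat_ext => /=; field; exact: hk.
Qed.

Lemma qinv_unit1 u : qnorm2 u = 1 -> u^-1 = qconj u.
Proof. move=> h; rewrite -qinvE /qinv h invr1; qext. Qed.

Lemma comm_lin q (a b c d : R) :
  GRing.comm (q * qreal a + qreal b) (q * qreal c + qreal d).
Proof. rewrite /GRing.comm; qext. Qed.

Lemma Fcl_real q (a b c d : R) :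
  Fcl (Mat2 (qreal a) (qreal c) (qreal b) (qreal d)) q =
  (q * qreal a + qreal b) * (q * qreal c + qreal d)^-1.
Proof.
rewrite /Fcl /= !(qmulE, qaddE, qinvE).
have h := comm_lin q a b c d.
by rewrite (commrV h).
Qed.
End G.


Section S.
Variable R : realType.
Implicit Types A B C X Y : mat2 R.
Implicit Types x y z q m u : quat R.

Definition kq q : R := (Num.sqrt (1 - qnorm2 q))^-1.
Definition Xq q := Mat2 (qreal (kq q)) (qreal (kq q) * qconj q) (qreal (kq q) * q) (qreal (kq q)).

Lemma kq_prop q : qnorm2 q < 1 -> kq q ^+ 2 * (1 - qnorm2 q) = 1 /\ kq q != 0.
Proof.
move=> hq; rewrite /kq.
have h0 : 0 < 1 - qnorm2 q by lra.
have hs : 0 < Num.sqrt (1 - qnorm2 q) by rewrite sqrtr_gt0.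
split; last by rewrite invr_eq0 lt0r_neq0.
by rewrite exprVn sqr_sqrtr ?(ltW h0) // mulVf // lt0r_neq0.
Qed.

Lemma Xq_sp11 q : qnorm2 q < 1 -> inSp11 (Xq q).
Proof.
move=> hq; have [hk _] := kq_prop hq.
rewrite /Xq /inSp11; move: (kq q) hk => k; rewrite /qnorm2 => hk.
apply: mat_ext; apply: quat_ext => /=; lra.
Qed.

Lemma phiq_Xq q : qnorm2 q < 1 -> phiq (Xq q) = q.
Proof.
move=> hq; have [_ hk] := kq_prop hq.
rewrite /phiq /Xq /= qinv_real -mulrA -qreal_comm mulrA -qrealM mulfV // qreal1 mul1r //.
Qed.

Lemma mid_sp11 : inSp11 (mid R).
Proof. apply: mat_ext; qext. Qed.

Lemma left_struct A : commutes_actions (mmul A) -> m10 A = 0 /\ m01 A = 0.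
Proof.
move=> hc.
have hu : inSp1 (- 1 : quat R) by rewrite /inSp1 /qnorm2 /=; ring.
have [h _] := hc _ _ hu mid_sp11.
have [e1 e2 e3 e4] := quat_comp (congr1 (@m10 R) h).
have [f1 f2 f3 f4] := quat_comp (congr1 (@m01 R) h).
move: e1 e2 e3 e4 f1 f2 f3 f4; case: A {h hc} => a c b d /= e1 e2 e3 e4 f1 f2 f3 f4.
split; apply: quat_ext => /=; lra.
Qed.

Lemma real_of_comm x : (Quat 0 1 0 0 : quat R) * x = x * Quat 0 1 0 0 ->
  (Quat 0 0 1 0 : quat R) * x = x * Quat 0 0 1 0 -> x = qreal (q0 x).
Proof.
case: x => a b c d h1 h2.
have [e1 e2 e3 e4] := quat_comp h1; have [f1 f2 f3 f4] := quat_comp h2.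
rewrite /= in e1 e2 e3 e4 f1 f2 f3 f4.
apply: quat_ext => /=; lra.
Qed.

Lemma right_struct A : commutes_actions (fun X => mmul X A) ->
  A = Mat2 (qreal (q0 (m00 A))) (qreal (q0 (m01 A))) (qreal (q0 (m10 A))) (qreal (q0 (m11 A))).
Proof.
move=> hc.
have hi : inSp1 (Quat 0 1 0 0 : quat R) by rewrite /inSp1 /qnorm2 /=; ring.
have hj : inSp1 (Quat 0 0 1 0 : quat R) by rewrite /inSp1 /qnorm2 /=; ring.
have [_ h1] := hc _ _ hi mid_sp11; have [_ h2] := hc _ _ hj mid_sp11.
rewrite !mmul1 in h1 h2.
case: A h1 h2 {hc} => a c b d h1 h2.
have [e1 e2 e3 e4] := quat_comp (congr1 (@m00 R) h1).
have [e5 e6 e7 e8] := quat_comp (congr1 (@m01 R) h1).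
have [e9 e10 e11 e12] := quat_comp (congr1 (@m10 R) h1).
have [e13 e14 e15 e16] := quat_comp (congr1 (@m11 R) h1).
have [f1 f2 f3 f4] := quat_comp (congr1 (@m00 R) h2).
have [f5 f6 f7 f8] := quat_comp (congr1 (@m01 R) h2).
have [f9 f10 f11 f12] := quat_comp (congr1 (@m10 R) h2).
have [f13 f14 f15 f16] := quat_comp (congr1 (@m11 R) h2).
rewrite /= in e1 e2 e3 e4 e5 e6 e7 e8 e9 e10 e11 e12 e13 e14 e15 e16
  f1 f2 f3 f4 f5 f6 f7 f8 f9 f10 f11 f12 f13 f14 f15 f16.
apply: mat_ext; apply: quat_ext => /=; lra.
Qed.
End S.


Section T.
Variable R : realType.
Implicit Types A B C X Y : mat2 R.
Implicit Types x y z q m u : quat R.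

Lemma phiq_decomp X : inSp11 X -> m10 X = phiq X * m11 X.
Proof. by move=> hX; rewrite /phiq -mulrA mulVr ?mulr1 // sp11_dunit. Qed.

Lemma phiq_right X (a b c d : R) : inSp11 X -> d ^+ 2 = 1 + c ^+ 2 ->
  phiq (mmul X (Mat2 (qreal a) (qreal c) (qreal b) (qreal d))) =
  (phiq X * qreal a + qreal b) * (phiq X * qreal c + qreal d)^-1.
Proof.
move=> hX hd.
have hb := phiq_decomp hX; have hdu := sp11_dunit hX; have hm := phiq_B hX.
have hP := unit_lin hm hd.
rewrite {1}/phiq /= !(qmulE, qaddE) hb.
set m := phiq X in hb hm hP *; set D := m11 X in hb hdu *.
have e1 : m * D * qreal a + D * qreal b = (m * qreal a + qreal b) * D.
  by rewrite mulrDl -!mulrA !(qreal_comm _ D).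
have e2 : m * D * qreal c + D * qreal d = (m * qreal c + qreal d) * D.
  by rewrite mulrDl -!mulrA !(qreal_comm _ D).
by rewrite e1 e2 invrM // mulrA mulrK.
Qed.

Lemma phiq_left A X : inSp11 X -> m10 A = 0 -> m11 A \is a GRing.unit ->
  phiq (mmul A X) = m11 A * phiq X * (m11 A)^-1.
Proof.
move=> hX h10 hu.
have hb := phiq_decomp hX; have hdu := sp11_dunit hX.
rewrite {1}/phiq /= !(qmulE, qaddE) h10 !mul0r !add0r hb.
by rewrite invrM // !mulrA mulrK.
Qed.

Lemma mob_ball q (c s : R) : qnorm2 q < 1 -> c ^+ 2 - s ^+ 2 = 1 ->
  qnorm2 ((q * qreal c + qreal s) * (q * qreal s + qreal c)^-1) < 1.
Proof.
move=> hq hcs.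
have hP : (q * qreal s + qreal c) \is a GRing.unit by apply: unit_lin => //; lra.
have hP0 : 0 < qnorm2 (q * qreal s + qreal c).
  by rewrite lt_neqAle eq_sym -qunitE hP qnorm2_ge0.
rewrite qnorm2_mul qnorm2_inv ltr_pdivrMr // mul1r.
have e : qnorm2 (q * qreal s + qreal c) - qnorm2 (q * qreal c + qreal s) =
  (c ^+ 2 - s ^+ 2) * (1 - qnorm2 q) by rewrite /qnorm2 /=; ring.
rewrite hcs mul1r in e; lra.
Qed.

Lemma Hmat_sp11 (t : R) : inSp11 (Hmat t).
Proof.
have h := cosh_sinh t; rewrite /Hmat /inSp11.
move: (coshR t) (sinhR t) h => c s h.
apply: mat_ext; apply: quat_ext => /=; lra.
Qed.

Lemma Fcl_H (t : R) q : Fcl (Hmat t) q =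
  (q * qreal (coshR t) + qreal (sinhR t)) * (q * qreal (sinhR t) + qreal (coshR t))^-1.
Proof. exact: Fcl_real. Qed.
End T.


Section F.
Variable R : realType.
Implicit Types A B C X Y : mat2 R.
Implicit Types x y z m u : quat R.

Lemma valB (q : Ball R) : qnorm2 (val q) < 1. Proof. by case: q. Qed.

Lemma negB_proof (q : Ball R) : inB (- val q).
Proof. have := valB q; rewrite /inB /qnorm2 /=. lra. Qed.
Definition negB (q : Ball R) : Ball R := exist _ _ (negB_proof q).

Lemma cB_proof u (hu : inSp1 u) (q : Ball R) : inB (u * val q * qconj u).
Proof. by rewrite /inB !qnorm2_mul qnorm2_conj hu mul1r mulr1; apply: valB. Qed.
Definition cB u (hu : inSp1 u) (q : Ball R) : Ball R := exist _ _ (cB_proof hu q).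

Lemma gF_proof (t : R) (q : Ball R) : inB (Fcl (Hmat t) (val q)).
Proof. rewrite /inB Fcl_H; apply: mob_ball; [exact: valB| exact: cosh_sinh]. Qed.
Definition gF (t : R) (q : Ball R) : Ball R := exist _ _ (gF_proof t q).

Lemma Phi_Xq (q : Ball R) : Phi_rel (Xq (val q)) q.
Proof.
have hq := valB q; have hX := Xq_sp11 hq.
have e : exist _ (phiq (Xq (val q))) (phiq_B hX) = q by apply: ball_eq; rewrite /= phiq_Xq.
by rewrite -{2}e; apply: phi_exists.
Qed.

Lemma induced_of (ft : mat2 R -> mat2 R) (f : Ball R -> Ball R) :
  (forall X, inSp11 X -> inSp11 (ft X)) ->
  (forall X (q : Ball R), inSp11 X -> val q = phiq X -> val (f q) = phiq (ft X)) ->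
  induced ft f.
Proof.
move=> hsp hf X hX q hq.
have hY := hsp X hX.
have e : exist _ (phiq (ft X)) (phiq_B hY) = f q.
  by apply: ball_eq; rewrite /= (hf X q hX (phi_unique hX hq)).
rewrite -e; exact: phi_exists.
Qed.

Lemma inSp1_1 : inSp1 (1 : quat R). Proof. by rewrite /inSp1 /qnorm2 /=; ring. Qed.

Lemma unit_sp1 u : inSp1 u -> u \is a GRing.unit.
Proof. by move=> h; apply: qunit_norm; rewrite h. Qed.

Lemma trans_cB u (hu : inSp1 u) : translation_maps (cB hu).
Proof.
set A := Mat2 1 0 0 u.
have hA : inSp11 A.
  rewrite /inSp1 /qnorm2 in hu; rewrite /inSp11 /A.
  apply: mat_ext; apply: quat_ext => /=; lra.
exists A; split => //; left; split.
  move=> w X hw hX; split; last exact: mmulA.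
  rewrite !mmulA; congr mmul; rewrite /A; mext.
apply: induced_of; first by move=> X hX; apply: sp11M.
move=> X q hX e; rewrite /= phiq_left // ?unit_sp1 // -e /A /=.
by rewrite qinv_unit1.
Qed.

Lemma trans_negB : translation_maps negB.
Proof.
pose A := Mat2 (qreal (-1 : R)) (qreal (0:R)) (qreal (0:R)) (qreal (1:R)).
have hA : inSp11 A by rewrite /A; apply: mat_ext; qext.
exists A; split => //; right; split.
  move=> w X hw hX; split; first by rewrite mmulA.
  rewrite -!mmulA; congr mmul; rewrite /A; mext.
apply: induced_of; first by move=> X hX; apply: sp11M.
move=> X q hX e; rewrite /A phiq_right //; last by rewrite /= ; ring.
rewrite -e qreal0 mulr0 addr0 add0r qreal1 invr1 mulr1.
by rewrite qrealN qreal1 mulrN1.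
Qed.

Lemma trans_gF (t : R) : translation_maps (gF t).
Proof.
have hA := Hmat_sp11 t.
exists (Hmat t); split => //; right; split.
  move=> w X hw hX; split; first by rewrite mmulA.
  rewrite -!mmulA; congr mmul; rewrite /Hmat; mext.
apply: induced_of; first by move=> X hX; apply: sp11M.
move=> X q hX e; rewrite /Hmat phiq_right //; last by have := cosh_sinh t; lra.
by rewrite /= Fcl_H e.
Qed.
End F.


Lemma gen_mono (T : Type) (S S' : (T -> T) -> Prop) :
  (forall f, S f -> gen_group S' f) -> forall f, gen_group S f -> gen_group S' f.
Proof.
move=> hS f; elim => {f}.
- by move=> f /hS.
- exact: gen_id.
- by move=> f g _ hf _ hg; apply: gen_comp.
- by move=> f g _ hf h1 h2; apply: (gen_inv hf h1 h2).
Qed.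

Section H.
Variable R : realType.
Implicit Types A B C X Y : mat2 R.
Implicit Types x y z m u : quat R.

Definition mob (a b c d : R) (q : quat R) :=
  (q * qreal a + qreal b) * (q * qreal c + qreal d)^-1.

Lemma mob_scale (k a b c d : R) q : k != 0 -> mob (k * a) (k * b) (k * c) (k * d) q = mob a b c d q.
Proof.
move=> hk; rewrite /mob !qrealM.
have e : forall a' b', q * (qreal k * qreal a') + qreal k * qreal b' = qreal k * (q * qreal a' + qreal b').
  by move=> a' b'; rewrite mulrDr mulrA -(qreal_comm k q) -mulrA.
rewrite !e qinv_scale // -mulrA (mulrA (q * qreal a + qreal b)) -(qreal_comm (k^-1)).
by rewrite !mulrA -qrealM mulfV // qreal1 mul1r.
Qed.

Lemma mob_neg (a b c d : R) q : mob a b (- c) (- d) q = - mob a b c d q.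
Proof. by rewrite /mob !qrealN mulrN -opprD invrN mulrN. Qed.

Lemma listed_negB : listed_maps (@negB R).
Proof.
left; exists (-1), 1; split; first by right.
split; first exact: inSp1_1.
move=> q; rewrite /=; apply: quat_ext => /=; ring.
Qed.

Lemma listed_gF (t : R) : listed_maps (gF t).
Proof. by right; exists t. Qed.

Lemma listed_gen (f : Ball R -> Ball R) : listed_maps f -> gen_group (@translation_maps R) f.
Proof.
case=> [[eps [u [heps [hu hf]]]] | [t hf]].
- case: heps => ?; subst eps.
  + have -> : f = cB hu.
      apply: functional_extensionality => q; apply: ball_eq; rewrite hf /=.
      by rewrite !qmulE qreal1 mul1r.
    by apply: gen_in; apply: trans_cB.
  + have -> : f = (@negB R) \o cB hu.
      apply: functional_extensionality => q; apply: ball_eq; rewrite hf /=.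
      by rewrite !qmulE qrealN qreal1 mulN1r !mulNr.
    by apply: gen_comp; apply: gen_in; [apply: trans_negB | apply: trans_cB].
- have -> : f = gF t by apply: functional_extensionality => q; apply: ball_eq; rewrite hf.
  by apply: gen_in; apply: trans_gF.
Qed.

Lemma trans_gen (f : Ball R -> Ball R) : translation_maps f -> gen_group (@listed_maps R) f.
Proof.
case=> A [hA [[hc hind] | [hc hind]]].
- have [h10 h01] := left_struct hc.
  have hu : inSp1 (m11 A).
    have [_ h _] := sp11P hA; rewrite h01 in h.
    rewrite /inSp1; move: h; rewrite /qnorm2 /=; lra.
  have hval : forall q, val (f q) = m11 A * val q * (m11 A)^-1.
    move=> q; have hX := Xq_sp11 (valB q).
    have hp := hind _ hX q (Phi_Xq q).
    rewrite (phi_unique (sp11M hA hX) hp) phiq_left ?unit_sp1 // phiq_Xq //; exact: valB.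
  apply: gen_in; left; exists 1, (m11 A); split; first by left.
  split => // q; rewrite hval qinv_unit1 // qreal1 !qmulE mul1r //.
- have eA := right_struct hc.
  move: (q0 (m00 A)) (q0 (m01 A)) (q0 (m10 A)) (q0 (m11 A)) eA => al ga be de eA.
  rewrite eA in hA hind; clear hc eA.
  have [r1 r2 r3] := sp11P hA; rewrite /= !qnorm2_real in r1 r2.
  have r4 : ga * al = de * be.
    by have [e _ _ _] := quat_comp r3; move: e; rewrite /=; lra.
  clear r3.
  have hval : forall q, val (f q) = mob al be ga de (val q).
    move=> q; have hX := Xq_sp11 (valB q).
    have hp := hind _ hX q (Phi_Xq q).
    rewrite (phi_unique (sp11M hX hA) hp) phiq_right //; last by lra.
    by rewrite phiq_Xq //; exact: valB.
  have hal : al != 0 by apply/eqP => h; rewrite h in r1; nra.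
  have hgb : ga ^+ 2 = be ^+ 2.
    have : ga ^+ 2 * al ^+ 2 = de ^+ 2 * be ^+ 2 by rewrite -!exprMn r4.
    have -> : al ^+ 2 = 1 + be ^+ 2 by lra.
    have -> : de ^+ 2 = 1 + ga ^+ 2 by lra.
    nra.
  have hda : de ^+ 2 = al ^+ 2 by lra.
  pose sg : R := if 0 < al then 1 else -1.
  have hsg : sg != 0 by rewrite /sg; case: ifP => _; [exact: oner_neq0 | by rewrite oppr_eq0 oner_neq0].
  have hsg2 : sg * sg = 1 by rewrite /sg; case: ifP => _; ring.
  have hc : 0 < sg * al.
    rewrite /sg; case: ifP => h; first by rewrite mul1r.
    by rewrite mulN1r oppr_gt0 lt_neqAle hal /= leNgt h.
  have [t [ht1 ht2]] : exists t, coshR t = sg * al /\ sinhR t = sg * be.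
    apply: hyp_param => //.
    have -> : (sg * al) ^+ 2 - (sg * be) ^+ 2 = (sg * sg) * (al ^+ 2 - be ^+ 2) by ring.
    by rewrite hsg2 mul1r r1.
  have hmob : forall q, mob al be ga de q = mob (sg * al) (sg * be) (sg * ga) (sg * de) q.
    by move=> q; rewrite mob_scale.
  have hG : forall q, val (gF t q) = mob (sg * al) (sg * be) (sg * be) (sg * al) (val q).
    by move=> q; rewrite /= Fcl_H ht1 ht2.
  move/eqP: hda; rewrite eqf_sqr => /orP [/eqP hd | /eqP hd].
  + have hgc : ga = be.
      apply: (mulIf hal); rewrite r4 hd; ring.
    have -> : f = gF t.
      apply: functional_extensionality => q; apply: ball_eq.
      by rewrite hval hmob hG hd hgc.
    by apply: gen_in; apply: listed_gF.
  + have hgc : ga = - be.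
      apply: (mulIf hal); rewrite r4 hd; ring.
    have -> : f = (@negB R) \o gF t.
      apply: functional_extensionality => q; apply: ball_eq.
      rewrite hval hmob /= Fcl_H ht1 ht2 hd hgc !mulrN mob_neg //.
    by apply: gen_comp; apply: gen_in; [apply: listed_negB | apply: listed_gF].
Qed.
End H.

Theorem proposition3p11 (R : realType) :
  forall f : Ball R -> Ball R,
    gen_group (@translation_maps R) f <-> gen_group (@listed_maps R) f.
Proof.
move=> f; split; apply: gen_mono => g.
- exact: trans_gen.
- exact: listed_gen.
Qed.
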